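(* Let $H$ be a CAT($-1$) space and let $\gamma_1,\gamma_2:[0,\infty)\to H$ be unit speed geodesic rays with $\gamma_1(\infty)=\gamma_2(\infty)=\zeta\in\partial H$. Set $d=d(\gamma_1(0),\gamma_2(0))$ and $\rho=\rho_\zeta(\gamma_1(0),\gamma_2(0))$. Then for all $s,t\geq 0$, $$d(\gamma_1(s),\gamma_2(t))\leq\cosh^{-1}\left(\frac{\cosh(d)-\cosh(\rho)}{e^{t+s}}+\cosh(\rho+s-t)\right).$$ Moreover, if $\rho=0$ and $d>0$, then for all $t\geq0$, $$d(\gamma_1(t),\gamma_2(t))\leq 2\sinh^{-1}\left(\sinh(d/2)e^{-t}\right)\leq\begin{cases} d-\frac{2}{d}\left(e^{-d}+d-1\right)t & 0\leq t\leq\frac d2,\\ 2\sinh\left(\frac d2\right)e^{-t} & t>\frac d2.\end{cases}$$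
   Context: $\partial H$ is the geodesic boundary of $H$. The Busemann function is $\rho_\zeta(p,q)=\lim_{z\to\zeta}(d(q,z)-d(p,z))$. *)

(* Defs.v *)
From Stdlib Require Import Reals Lra.
Open Scope R_scope.

(* inverse hyperbolic cosine (on [1, +oo)) *)
Definition arccosh (x : R) : R := ln (x + sqrt (x ^ 2 - 1)).

Definition is_metric {X : Type} (d : X -> X -> R) : Prop :=
  (forall x y, 0 <= d x y) /\
  (forall x y, d x y = 0 <-> x = y) /\
  (forall x y, d x y = d y x) /\
  (forall x y z, d x z <= d x y + d y z).

Definition geodesic_seg {X : Type} (d : X -> X -> R) (c : R -> X)
  (p q : X) (L : R) : Prop :=
  0 <= L /\ c 0 = p /\ c L = q /\
  forall s t, 0 <= s <= L -> 0 <= t <= L -> d (c s) (c t) = Rabs (s - t).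

Definition geodesic_space {X : Type} (d : X -> X -> R) : Prop :=
  forall p q, exists c, geodesic_seg d c p q (d p q).

(* The hyperbolic plane H^2 (curvature -1), hyperboloid model in R^3 *)
Definition H2pt := (R * R * R)%type.
Definition in_H2 (P : H2pt) : Prop :=
  let '(x0, x1, x2) := P in x0 ^ 2 - x1 ^ 2 - x2 ^ 2 = 1 /\ 0 < x0.
Definition dH2 (P Q : H2pt) : R :=
  let '(x0, x1, x2) := P in let '(y0, y1, y2) := Q in
  arccosh (x0 * y0 - x1 * y1 - x2 * y2).

(* x = c s lies on the side [p,q] (parametrised by c), and xb is its
   comparison point on the side [P,Q] of a comparison triangle in H^2 *)
Definition side_pt {X : Type} (d : X -> X -> R) (c : R -> X) (p q : X)
  (P Q : H2pt) (x : X) (xb : H2pt) : Prop :=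
  exists s, 0 <= s <= d p q /\ x = c s /\ in_H2 xb /\
            dH2 P xb = s /\ dH2 xb Q = d p q - s.

Definition CAT_m1 {X : Type} (d : X -> X -> R) : Prop :=
  is_metric d /\ geodesic_space d /\
  forall (p q r : X) (cpq cqr crp : R -> X),
    geodesic_seg d cpq p q (d p q) ->
    geodesic_seg d cqr q r (d q r) ->
    geodesic_seg d crp r p (d r p) ->
    forall P Q Rp : H2pt, in_H2 P -> in_H2 Q -> in_H2 Rp ->
    dH2 P Q = d p q -> dH2 Q Rp = d q r -> dH2 Rp P = d r p ->
    forall (x y : X) (xb yb : H2pt),
      (side_pt d cpq p q P Q x xb \/ side_pt d cqr q r Q Rp x xb \/
       side_pt d crp r p Rp P x xb) ->
      (side_pt d cpq p q P Q y yb \/ side_pt d cqr q r Q Rp y yb \/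
       side_pt d crp r p Rp P y yb) ->
      d x y <= dH2 xb yb.

Definition geodesic_ray {X : Type} (d : X -> X -> R) (g : R -> X) : Prop :=
  forall s t, 0 <= s -> 0 <= t -> d (g s) (g t) = Rabs (s - t).

(* two rays define the same point of the geodesic boundary *)
Definition asymptotic {X : Type} (d : X -> X -> R) (g1 g2 : R -> X) : Prop :=
  exists C, forall t, 0 <= t -> d (g1 t) (g2 t) <= C.

Definition lim_infty (f : R -> R) (l : R) : Prop :=
  forall eps, 0 < eps -> exists T, forall t, T <= t -> Rabs (f t - l) < eps.

(* Busemann function rho_zeta(p,q) = lim_{z -> zeta} (d(q,z) - d(p,z)),
   where zeta = g(oo), computed with z = g(t), t -> oo. *)
Definition busemann {X : Type} (d : X -> X -> R) (g : R -> X) (p q : X)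
  (rho : R) : Prop :=
  lim_infty (fun t => d q (g t) - d p (g t)) rho.

(* Main.v *)
Require Import Defs.
From Stdlib Require Import Reals Lra Psatz.
From Coquelicot Require Import Coquelicot.
Open Scope R_scope.


Lemma exp_opp_mul x : exp x * exp (-x) = 1.
Proof. rewrite <- exp_plus. replace (x + - x) with 0 by ring. apply exp_0. Qed.

Lemma cosh_sinh_sq x : cosh x ^ 2 - sinh x ^ 2 = 1.
Proof. unfold cosh, sinh. pose proof (exp_opp_mul x). nra. Qed.

Lemma cosh_sub x y : cosh (x - y) = cosh x * cosh y - sinh x * sinh y.
Proof.
  unfold cosh, sinh. unfold Rminus. rewrite exp_plus, Ropp_plus_distr, exp_plus, Ropp_involutive.
  field.
Qed.

Lemma cosh_add x y : cosh (x + y) = cosh x * cosh y + sinh x * sinh y.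
Proof.
  unfold cosh, sinh. rewrite exp_plus, Ropp_plus_distr, exp_plus. field.
Qed.

Lemma cosh_even x : cosh (- x) = cosh x.
Proof. unfold cosh. rewrite Ropp_involutive. lra. Qed.

Lemma sinh_nonneg x : 0 <= x -> 0 <= sinh x.
Proof.
  intros Hx. unfold sinh. assert (exp (-x) <= exp x).
  { destruct (Req_dec x 0). subst. rewrite Ropp_0. lra. left. apply exp_increasing. lra. }
  lra.
Qed.

Lemma cosh_pos x : 0 < cosh x.
Proof. unfold cosh. pose proof (exp_pos x). pose proof (exp_pos (-x)). lra. Qed.

Lemma cosh_ge1 x : 1 <= cosh x.
Proof. pose proof (cosh_sinh_sq x). pose proof (cosh_pos x). nra. Qed.

Lemma arccosh_cosh x : 0 <= x -> arccosh (cosh x) = x.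
Proof.
  intros Hx. unfold arccosh.
  assert (E : cosh x ^ 2 - 1 = sinh x ^ 2) by (pose proof (cosh_sinh_sq x); lra).
  rewrite E. rewrite sqrt_pow2 by (apply sinh_nonneg; auto).
  replace (cosh x + sinh x) with (exp x) by (unfold cosh, sinh; field).
  apply ln_exp.
Qed.

Lemma cosh_mono x y : 0 <= x <= y -> cosh x <= cosh y.
Proof.
  intros [Hx Hxy].
  replace y with ((y + x)/2 + (y - x)/2) by field.
  replace x with ((y + x)/2 - (y - x)/2) at 1 by field.
  rewrite cosh_add, cosh_sub.
  pose proof (sinh_nonneg ((y + x)/2)). pose proof (sinh_nonneg ((y-x)/2)).
  assert (0 <= sinh ((y + x) / 2) * sinh ((y - x) / 2)) by (apply Rmult_le_pos; lra).
  lra.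
Qed.

Lemma cosh_abs x : cosh (Rabs x) = cosh x.
Proof. unfold Rabs. destruct (Rcase_abs x). apply cosh_even. auto. Qed.


Lemma hinge (X : Type) (d : X -> X -> R) (H : CAT_m1 d) (V A Bv : X) (c1 c2 : R -> X) (u v : R) :
  geodesic_seg d c1 V A (d V A) -> geodesic_seg d c2 Bv V (d Bv V) ->
  0 < d V A -> 0 < d Bv V -> 0 <= u <= d V A -> 0 <= v <= d Bv V ->
  d (c1 u) (c2 (d Bv V - v)) <=
  arccosh (cosh u * cosh v - sinh u * sinh v *
    ((cosh (d V A) * cosh (d Bv V) - cosh (d A Bv)) / (sinh (d V A) * sinh (d Bv V)))).
Proof.
  intros H1 H2 Ha Hb Hu Hv.
  destruct H as [[Hpos [Hzero [Hsym Htri]]] [Hgeo Hcat]].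
  destruct (Hgeo A Bv) as [c3 H3].
  set (a := d V A) in *|-*. set (b := d Bv V) in *|-*. set (e := d A Bv) in *|-*.
  set (k := (cosh a * cosh b - cosh e) / (sinh a * sinh b)).
  assert (Hsa : 0 < sinh a) by (rewrite <- sinh_0; apply sinh_lt; lra).
  assert (Hsb : 0 < sinh b) by (rewrite <- sinh_0; apply sinh_lt; lra).
  assert (Te1 : e <= a + b).
  { unfold e, a, b. rewrite (Hsym Bv V). rewrite (Hsym V A). apply Htri. }
  assert (Te2 : Rabs (a - b) <= e).
  { unfold e, a, b. apply Rabs_le. pose proof (Htri V Bv A). pose proof (Htri Bv A V).
    rewrite (Hsym Bv A) in *. rewrite (Hsym V Bv) in *. rewrite (Hsym A V) in *. lra. }
  assert (Hk1 : k <= 1).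
  { unfold k. apply Rmult_le_reg_r with (sinh a * sinh b). nra.
    unfold Rdiv. rewrite Rmult_assoc, Rinv_l by nra. 
    pose proof (cosh_mono (Rabs (a - b)) e). rewrite cosh_abs, cosh_sub in H. 
    assert (0 <= Rabs (a - b)) by apply Rabs_pos. lra. }
  assert (Hk2 : -1 <= k).
  { unfold k. apply Rmult_le_reg_r with (sinh a * sinh b). nra.
    unfold Rdiv. rewrite Rmult_assoc, Rinv_l by nra. 
    pose proof (cosh_mono e (a + b)). rewrite cosh_add in H.
    assert (0 <= e) by apply Hpos. lra. }
  assert (Hkdef : cosh a * cosh b - sinh a * sinh b * k = cosh e).
  { unfold k. field. lra. }
  set (sk := sqrt (1 - k ^ 2)).
  assert (Hsk : sk ^ 2 = 1 - k ^ 2).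
  { unfold sk. rewrite pow2_sqrt. auto. nra. }
  assert (Hcs : forall z, cosh z ^ 2 - sinh z ^ 2 = 1) by apply cosh_sinh_sq.
  pose (P := (1, 0, 0) : H2pt).
  pose (Q := (cosh a, sinh a, 0) : H2pt).
  pose (Rp := (cosh b, sinh b * k, sinh b * sk) : H2pt).
  pose (xb := (cosh u, sinh u, 0) : H2pt).
  pose (yb := (cosh v, sinh v * k, sinh v * sk) : H2pt).
  assert (Hin : forall z c s, c ^ 2 + s ^ 2 = 1 -> in_H2 (cosh z, sinh z * c, sinh z * s)).
  { intros z c s Hcs2. unfold in_H2. split. pose proof (Hcs z). nra. apply cosh_pos. }
  assert (HP : in_H2 P). { unfold P, in_H2. split. lra. lra. }
  assert (HQ : in_H2 Q). { replace Q with (cosh a, sinh a * 1, sinh a * 0). apply Hin. lra. unfold Q. f_equal. f_equal. ring. ring. }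
  assert (HR : in_H2 Rp). { apply Hin. lra. }
  assert (Hx : in_H2 xb). { replace xb with (cosh u, sinh u * 1, sinh u * 0). apply Hin. lra. unfold xb. f_equal. f_equal. ring. ring. }
  assert (Hy : in_H2 yb). { apply Hin. lra. }
  assert (c0 : cosh 0 = 1) by apply cosh_0.
  eapply Rle_trans.
  - apply (Hcat V A Bv c1 c3 c2 H1 H3 H2 P Q Rp HP HQ HR).
    + unfold dH2, P, Q. cbv iota beta. replace (1 * cosh a - 0 * sinh a - 0 * 0) with (cosh a) by ring.
      apply arccosh_cosh. apply Hpos.
    + unfold dH2, Q, Rp. cbv iota beta. 
      replace (cosh a * cosh b - sinh a * (sinh b * k) - 0 * (sinh b * sk)) with (cosh e) by (rewrite <- Hkdef; ring).
      apply arccosh_cosh. apply Hpos.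
    + unfold dH2, P, Rp. cbv iota beta. 
      replace (cosh b * 1 - sinh b * k * 0 - sinh b * sk * 0) with (cosh b) by ring.
      apply arccosh_cosh. (unfold a, b in *; lra).
    + left. exists u. split. (unfold a, b in *; lra). split. reflexivity. split. exact Hx. split.
      * unfold dH2, P, xb. cbv iota beta. replace (1 * cosh u - 0 * sinh u - 0 * 0) with (cosh u) by ring.
        apply arccosh_cosh. (unfold a, b in *; lra).
      * unfold dH2, xb, Q. cbv iota beta.
        replace (cosh u * cosh a - sinh u * sinh a - 0 * 0) with (cosh (a - u)) by (rewrite cosh_sub; ring).
        apply arccosh_cosh. (unfold a, b in *; lra).
    + right. right. exists (b - v). split. (unfold a, b in *; lra). split. reflexivity. split. exact Hy. split.
      * unfold dH2, Rp, yb. cbv iota beta.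
        replace (cosh b * cosh v - sinh b * k * (sinh v * k) - sinh b * sk * (sinh v * sk)) with (cosh (b - v)).
        apply arccosh_cosh. (unfold a, b in *; lra).
        rewrite cosh_sub. transitivity (cosh b * cosh v - sinh b * sinh v * (k^2 + sk^2)). rewrite Hsk; ring.
        ring.
      * unfold dH2, P, yb. cbv iota beta. replace (cosh v * 1 - sinh v * k * 0 - sinh v * sk * 0) with (cosh v) by ring.
        replace (d Bv V - (b - v)) with v by (unfold b; ring). apply arccosh_cosh. (unfold a, b in *; lra).
  - unfold dH2, xb, yb. cbv iota beta. right. f_equal. fold k. ring.
Qed.


Lemma lim_eqv (u : nat -> R) (l l' : R) : is_lim_seq u l -> l = l' -> is_lim_seq u l'.
Proof. intros H ->. exact H. Qed.

Lemma lim_exp_neg w : is_lim_seq w p_infty -> is_lim_seq (fun n => exp (- w n)) 0.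
Proof.
  intros Hw. apply is_lim_seq_spec. intros eps. apply is_lim_seq_spec in Hw.
  destruct (Hw (- ln eps)) as [N HN]. exists N. intros n Hn. specialize (HN n Hn).
  rewrite Rminus_0_r, Rabs_pos_eq by (left; apply exp_pos).
  rewrite <- (exp_ln eps) by apply cond_pos. apply exp_increasing. lra.
Qed.

Lemma ev_pos w : is_lim_seq w p_infty -> eventually (fun n => 0 < w n).
Proof. intros Hw. apply is_lim_seq_spec in Hw. apply (Hw 0). Qed.

Lemma sinh_ratio w c : is_lim_seq w p_infty ->
  is_lim_seq (fun n => sinh (w n - c) / sinh (w n)) (exp (- c)).
Proof.
  intros Hw.
  assert (HE := lim_exp_neg w Hw).
  set (E := fun n => exp (- w n)) in HE.
  apply is_lim_seq_ext_loc with (fun n => (exp (-c) - exp c * (E n * E n)) / (1 - E n * E n)).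
  - destruct (ev_pos w Hw) as [N HN]. exists N. intros n Hn. specialize (HN n Hn).
    unfold E, sinh. 
    assert (HX : exp (w n) = / exp (- w n)) by (rewrite exp_Ropp, Rinv_inv; auto).
    assert (Hlt : exp (- w n) < 1) by (rewrite <- exp_0; apply exp_increasing; lra).
    assert (Hp := exp_pos (- w n)).
    unfold Rminus. rewrite exp_plus, Ropp_plus_distr, exp_plus, Ropp_involutive, HX.
    field. split; nra.
  - apply lim_eqv with ((exp (-c) - exp c * (0 * 0)) / (1 - 0 * 0)). 2: field.
    apply is_lim_seq_div'. apply is_lim_seq_minus'. apply is_lim_seq_const.
    apply is_lim_seq_mult'. apply is_lim_seq_const. apply is_lim_seq_mult'; auto.
    apply is_lim_seq_minus'. apply is_lim_seq_const. apply is_lim_seq_mult'; auto. lra.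
Qed.

Lemma inv_sinh_lim w : is_lim_seq w p_infty -> is_lim_seq (fun n => / sinh (w n)) 0.
Proof.
  intros Hw.
  assert (HE := lim_exp_neg w Hw).
  set (E := fun n => exp (- w n)) in HE.
  apply is_lim_seq_ext_loc with (fun n => 2 * E n / (1 - E n * E n)).
  - destruct (ev_pos w Hw) as [N HN]. exists N. intros n Hn. specialize (HN n Hn).
    unfold E, sinh. 
    assert (HX : exp (w n) = / exp (- w n)) by (rewrite exp_Ropp, Rinv_inv; auto).
    assert (Hlt : exp (- w n) < 1) by (rewrite <- exp_0; apply exp_increasing; lra).
    assert (Hp := exp_pos (- w n)).
    rewrite HX.
    field. split; nra.
  - apply lim_eqv with (2 * 0 / (1 - 0 * 0)). 2: field.
    apply is_lim_seq_div'. apply is_lim_seq_mult'. apply is_lim_seq_const. auto.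
    apply is_lim_seq_minus'. apply is_lim_seq_const. apply is_lim_seq_mult'; auto. lra.
Qed.

Lemma lim_cosh (u : nat -> R) (l : R) : is_lim_seq u l -> is_lim_seq (fun n => cosh (u n)) (cosh l).
Proof.
  intros Hu. apply is_lim_seq_continuous. 
  apply derivable_continuous_pt. apply derivable_pt_cosh. exact Hu.
Qed.

Lemma lim_arccosh (u : nat -> R) (l : R) : is_lim_seq u l -> 1 <= l ->
  is_lim_seq (fun n => arccosh (u n)) (arccosh l).
Proof.
  intros Hu Hl. unfold arccosh.
  apply is_lim_seq_continuous.
  - apply continuity_pt_filterlim. apply continuous_ln.
    assert (0 <= sqrt (l ^ 2 - 1)) by apply sqrt_pos. lra.
  - apply is_lim_seq_plus'; auto.
    apply is_lim_seq_continuous.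
    + apply continuity_pt_sqrt. nra.
    + apply is_lim_seq_minus'. 2: apply is_lim_seq_const.
      replace (l ^ 2) with (l * (l * 1)) by ring.
      apply is_lim_seq_ext with (fun n => u n * (u n * 1)). intros; ring.
      apply is_lim_seq_mult'; auto. apply is_lim_seq_mult'; auto. apply is_lim_seq_const.
Qed.

Lemma lim_infty_seq (f : R -> R) (l : R) : lim_infty f l -> is_lim_seq (fun n => f (INR n)) l.
Proof.
  intros Hf. apply is_lim_seq_spec. intros eps.
  destruct (Hf eps (cond_pos eps)) as [T HT].
  pose proof is_lim_seq_INR as HI. apply is_lim_seq_spec in HI.
  destruct (HI T) as [N HN]. exists N. intros n Hn. apply HT. left. apply HN. auto.
Qed.

Lemma arccosh_1 : arccosh 1 = 0.
Proof. rewrite <- cosh_0. apply arccosh_cosh. lra. Qed.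


Lemma alg1 a b u v c : sinh a <> 0 -> sinh b <> 0 ->
  cosh u * cosh v - sinh u * sinh v * ((cosh a * cosh b - c) / (sinh a * sinh b)) =
  cosh (u - v) + sinh u / sinh a * (sinh v / sinh b) * (c - cosh (a - b)).
Proof. intros Ha Hb. rewrite !cosh_sub. field. auto. Qed.

Lemma ray_seg (X : Type) (d : X -> X -> R) g L : geodesic_ray d g -> 0 <= L ->
  geodesic_seg d g (g 0) (g L) (d (g 0) (g L)).
Proof.
  intros Hr HL. assert (E : d (g 0) (g L) = L) by (rewrite Hr by lra; rewrite Rabs_minus_sym, Rabs_pos_eq; lra).
  rewrite E. split. auto. split. auto. split. auto. intros; apply Hr; lra.
Qed.

Lemma ray_d (X : Type) (d : X -> X -> R) g a b : geodesic_ray d g -> 0 <= a -> 0 <= b -> d (g a) (g b) = Rabs (a - b).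
Proof. intros Hr ? ?. apply Hr; auto. Qed.


Lemma stepA (X : Type) (d : X -> X -> R) (g1 g2 : R -> X) (Hcat : CAT_m1 d) (R1 : geodesic_ray d g1) s t Lx (σ : R -> X) : 0 <= s -> 0 <= t -> s < Lx -> t < d (g1 Lx) (g2 0) ->
  geodesic_seg d σ (g1 Lx) (g2 0) (d (g1 Lx) (g2 0)) ->
  d (g1 s) (σ (d (g1 Lx) (g2 0) - t)) <=
  arccosh (cosh (d (g1 Lx) (g2 0) - Lx + s - t) +
    sinh (d (g1 Lx) (g2 0) - t) / sinh (d (g1 Lx) (g2 0)) * (sinh (Lx - s) / sinh Lx) *
    (cosh (d (g1 0) (g2 0)) - cosh (d (g1 Lx) (g2 0) - Lx))).
Proof.
  intros Hs Ht HsL HtB Hσ.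
  assert (Hsym : forall x y, d x y = d y x) by apply Hcat.
  assert (EL : d (g1 0) (g1 Lx) = Lx) by (rewrite R1 by lra; rewrite Rabs_minus_sym, Rabs_pos_eq; lra).
  set (Bx := d (g1 Lx) (g2 0)) in *.
  assert (Hbpos : 0 < Bx) by lra.
  pose proof (hinge X d Hcat (g1 Lx) (g2 0) (g1 0) σ g1 (Bx - t) (Lx - s) Hσ (ray_seg X d g1 Lx R1 ltac:(lra))) as Hh.
  rewrite EL in Hh. fold Bx in Hh.
  replace (Lx - (Lx - s)) with s in Hh by ring.
  rewrite (Hsym (g2 0) (g1 0)) in Hh.
  rewrite Hsym. eapply Rle_trans. apply Hh; lra.
  right. f_equal. rewrite alg1.
  - f_equal. f_equal. ring.
  - assert (0 < sinh Bx) by (rewrite <- sinh_0; apply sinh_lt; lra). lra.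
  - assert (0 < sinh Lx) by (rewrite <- sinh_0; apply sinh_lt; lra). lra.
Qed.

Lemma stepB (X : Type) (d : X -> X -> R) (g1 g2 : R -> X) (Hcat : CAT_m1 d) (R2 : geodesic_ray d g2) t Lx (σ : R -> X) : 0 <= t -> t < Lx -> t < d (g1 Lx) (g2 0) ->
  geodesic_seg d σ (g1 Lx) (g2 0) (d (g1 Lx) (g2 0)) ->
  d (σ (d (g1 Lx) (g2 0) - t)) (g2 t) <=
  arccosh (cosh t * cosh t - sinh t * sinh t *
    ((cosh Lx * cosh (d (g1 Lx) (g2 0)) - cosh (d (g2 Lx) (g1 Lx))) / (sinh Lx * sinh (d (g1 Lx) (g2 0))))).
Proof.
  intros Ht HtL HtB Hσ.
  assert (Hsym : forall x y, d x y = d y x) by apply Hcat.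
  assert (EL : d (g2 0) (g2 Lx) = Lx) by (rewrite R2 by lra; rewrite Rabs_minus_sym, Rabs_pos_eq; lra).
  set (Bx := d (g1 Lx) (g2 0)) in *.
  pose proof (hinge X d Hcat (g2 0) (g2 Lx) (g1 Lx) g2 σ t t (ray_seg X d g2 Lx R2 ltac:(lra)) Hσ) as Hh.
  rewrite EL in Hh. fold Bx in Hh.
  rewrite Hsym. apply Hh; lra.
Qed.



Lemma ev_big M : eventually (fun n => M < INR n).
Proof. pose proof is_lim_seq_INR as HI. apply is_lim_seq_spec in HI. apply HI. Qed.

Lemma ev_and (P Q : nat -> Prop) : eventually P -> eventually Q -> eventually (fun n => P n /\ Q n).
Proof.
  intros [N1 H1] [N2 H2]. exists (max N1 N2). intros n Hn. split.
  apply H1. lia. apply H2. lia.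
Qed.

Lemma part1 (X : Type) (d : X -> X -> R) (g1 g2 : R -> X) (rho : R) :
  CAT_m1 d ->
  geodesic_ray d g1 -> geodesic_ray d g2 ->
  asymptotic d g1 g2 ->
  busemann d g1 (g1 0) (g2 0) rho ->
  forall s t, 0 <= s -> 0 <= t ->
     d (g1 s) (g2 t) <=
     arccosh ((cosh (d (g1 0) (g2 0)) - cosh rho) / exp (t + s)
              + cosh (rho + s - t)).
Proof.
  intros Hcat R1 R2 [C HC] Hb s t Hs Ht.
  assert (Hcat' := Hcat). destruct Hcat' as [[Hpos [Hzero [Hsym Htri]]] [Hgeo _]].
  set (d0 := d (g1 0) (g2 0)).
  pose (L := fun n : nat => INR n).
  pose (B := fun n : nat => d (g1 (INR n)) (g2 0)).
  pose (e := fun n : nat => d (g2 (INR n)) (g1 (INR n))).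
  pose (r := fun n : nat => B n - L n).
  assert (EL : forall x, 0 <= x -> d (g1 0) (g1 x) = x).
  { intros x Hx. rewrite R1 by lra. rewrite Rabs_minus_sym, Rabs_pos_eq; lra. }
  assert (EL2 : forall x, 0 <= x -> d (g2 0) (g2 x) = x).
  { intros x Hx. rewrite R2 by lra. rewrite Rabs_minus_sym, Rabs_pos_eq; lra. }
  assert (Hr : is_lim_seq r rho).
  { apply lim_infty_seq in Hb. eapply is_lim_seq_ext. 2: exact Hb.
    intros n. simpl. unfold r, B, L. rewrite EL by apply pos_INR. rewrite Hsym. reflexivity. }
  assert (HL : is_lim_seq L p_infty) by apply is_lim_seq_INR.
  assert (HB : is_lim_seq B p_infty).
  { apply is_lim_seq_ext with (fun n => L n + r n). intros n; unfold r; ring.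
    eapply is_lim_seq_plus. exact HL. exact Hr. reflexivity. }
  assert (Hrb : forall n, Rabs (r n) <= d0).
  { intros n. unfold r, B, L, d0. rewrite <- (EL (INR n)) at 2 by apply pos_INR.
    apply Rabs_le. split.
    - pose proof (Htri (g1 0) (g2 0) (g1 (INR n))). rewrite (Hsym (g2 0)) in H. lra.
    - pose proof (Htri (g1 (INR n)) (g1 0) (g2 0)). rewrite (Hsym (g1 (INR n)) (g1 0)) in H. lra. }
  assert (Hrho : Rabs rho <= d0).
  { apply Rabs_le. split.
    - assert (Hle := is_lim_seq_le_loc (fun _ => - d0) r (- d0) rho).
      simpl in Hle. apply Hle. exists 0%nat. intros n _. pose proof (Hrb n). apply Rabs_le_between in H. lra.
      apply is_lim_seq_const. exact Hr.
    - assert (Hle := is_lim_seq_le_loc r (fun _ => d0) rho d0).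
      simpl in Hle. apply Hle. exists 0%nat. intros n _. pose proof (Hrb n). apply Rabs_le_between in H. lra.
      exact Hr. apply is_lim_seq_const. }
  pose (F := fun n => cosh (r n + s - t) + sinh (B n - t) / sinh (B n) * (sinh (L n - s) / sinh (L n)) * (cosh d0 - cosh (r n))).
  pose (Fv := cosh (rho + s - t) + exp (- t) * exp (- s) * (cosh d0 - cosh rho)).
  assert (HF : is_lim_seq F Fv).
  { apply is_lim_seq_plus'.
    - apply lim_cosh. apply is_lim_seq_minus'. apply is_lim_seq_plus'. exact Hr. apply is_lim_seq_const. apply is_lim_seq_const.
    - apply is_lim_seq_mult'. apply is_lim_seq_mult'.
      apply (sinh_ratio B t HB). apply (sinh_ratio L s HL).
      apply is_lim_seq_minus'. apply is_lim_seq_const. apply lim_cosh. exact Hr. }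
  assert (Fv1 : 1 <= Fv).
  { unfold Fv. pose proof (cosh_ge1 (rho + s - t)).
    assert (cosh rho <= cosh d0). { rewrite <- cosh_abs. apply cosh_mono. split. apply Rabs_pos. exact Hrho. }
    assert (0 < exp (-t) * exp (-s)) by (apply Rmult_lt_0_compat; apply exp_pos). nra. }
  pose (G := fun n => cosh t * cosh t - sinh t * sinh t *
    ((cosh (L n) * cosh (B n) - cosh (e n)) / (sinh (L n) * sinh (B n)))).
  pose (Hn := fun n => 1 + sinh t * sinh t * / sinh (L n) * / sinh (B n) * (cosh C - 1)).
  assert (HH : is_lim_seq Hn 1).
  { apply lim_eqv with (1 + sinh t * sinh t * 0 * 0 * (cosh C - 1)). 2: ring.
    apply is_lim_seq_plus'. apply is_lim_seq_const.
    apply is_lim_seq_mult'. 2: apply is_lim_seq_const.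
    apply is_lim_seq_mult'. apply is_lim_seq_mult'. apply is_lim_seq_const.
    apply (inv_sinh_lim L HL). apply (inv_sinh_lim B HB). }
  assert (EV : eventually (fun n => 0 < L n /\ 0 < B n /\ s + t + 1 < L n /\ t + 1 < B n)).
  { destruct (ev_big (s + t + d0 + 1)) as [N HN]. exists N. intros n Hn'. specialize (HN n Hn').
    assert (B n >= L n - d0). { pose proof (Hrb n). apply Rabs_le_between in H. unfold r in H. lra. }
    assert (0 <= d0) by apply Hpos. unfold L in *. lra. }
  assert (HG : is_lim_seq G 1).
  { apply is_lim_seq_le_le_loc with (fun _ => 1) Hn. 2: apply is_lim_seq_const. 2: exact HH.
    destruct EV as [N HN]. exists N. intros n Hn'. destruct (HN n Hn') as [H1 [H2 [H3 H4]]].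
    assert (Hsl : 0 < sinh (L n)) by (rewrite <- sinh_0; apply sinh_lt; lra).
    assert (Hsb : 0 < sinh (B n)) by (rewrite <- sinh_0; apply sinh_lt; lra).
    assert (He1 : e n <= C).
    { unfold e. rewrite Hsym. apply HC. apply pos_INR. }
    assert (He2 : Rabs (L n - B n) <= e n).
    { unfold L, B, e. pose proof (EL2 (INR n) (pos_INR n)) as E2. apply Rabs_le.
      pose proof (Htri (g2 0) (g1 (INR n)) (g2 (INR n))) as T1. pose proof (Htri (g1 (INR n)) (g2 (INR n)) (g2 0)) as T2.
      rewrite (Hsym (g1 (INR n)) (g2 (INR n))) in T1, T2. rewrite (Hsym (g2 (INR n)) (g2 0)) in T2.
      rewrite (Hsym (g2 0) (g1 (INR n))) in T1. split; lra. }
    assert (Hc1 : cosh (L n - B n) <= cosh (e n)).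
    { rewrite <- cosh_abs. apply cosh_mono. split. apply Rabs_pos. auto. }
    assert (Hc2 : cosh (e n) <= cosh C).
    { apply cosh_mono. split. apply Hpos. auto. }
    assert (Hc3 := cosh_ge1 (L n - B n)).
    assert (EG : G n = 1 + sinh t * sinh t * / sinh (L n) * / sinh (B n) * (cosh (e n) - cosh (L n - B n))).
    { unfold G. rewrite cosh_sub. pose proof (cosh_sinh_sq t).
      replace (cosh t * cosh t) with (1 + sinh t * sinh t) by nra. field. split; lra. }
    set (P := sinh t * sinh t * / sinh (L n) * / sinh (B n)) in *.
    assert (0 <= P).
    { unfold P. apply Rmult_le_pos. apply Rmult_le_pos. nra. left. apply Rinv_0_lt_compat. auto.
      left. apply Rinv_0_lt_compat. auto. }
    unfold Hn. fold P. rewrite EG. split; nra. }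
  assert (Hmain : eventually (fun n => d (g1 s) (g2 t) <= arccosh (F n) + arccosh (G n))).
  { destruct EV as [N HN]. exists N. intros n Hn'. destruct (HN n Hn') as [H1 [H2 [H3 H4]]].
    destruct (Hgeo (g1 (INR n)) (g2 0)) as [σ Hσ].
    eapply Rle_trans. apply (Htri _ (σ (B n - t))).
    apply Rplus_le_compat.
    - unfold F, r, B, L. apply (stepA X d g1 g2 Hcat R1 s t (INR n) σ); auto. unfold L in H3. lra. unfold B in H4. lra.
    - unfold G, B, L, e. cbv beta. refine (stepB X d g1 g2 Hcat R2 t (INR n) σ Ht _ _ Hσ). unfold L in H3. lra. unfold B in H4. lra. }
  assert (Hfin := is_lim_seq_le_loc (fun _ => d (g1 s) (g2 t)) (fun n => arccosh (F n) + arccosh (G n))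
    (d (g1 s) (g2 t)) (arccosh Fv + arccosh 1) Hmain (is_lim_seq_const _)
    (is_lim_seq_plus' _ _ _ _ (lim_arccosh F Fv HF Fv1) (lim_arccosh G 1 HG ltac:(lra)))).
  simpl in Hfin. rewrite arccosh_1, Rplus_0_r in Hfin.
  replace ((cosh d0 - cosh rho) / exp (t + s) + cosh (rho + s - t)) with Fv. exact Hfin.
  unfold Fv. rewrite exp_plus, !exp_Ropp. field. split; apply Rgt_not_eq, exp_pos.
Qed.


Definition fder a x := 2 * (- a * exp (- x) * / sqrt ((a * exp (- x)) ^ 2 + 1)).

Lemma der_f a x : derivable_pt_lim (fun x => 2 * arcsinh (a * exp (- x))) x (fder a x).
Proof.
  apply is_derive_Reals. unfold fder. apply is_derive_scal.
  assert (H1 : is_derive (fun x => a * exp (-x)) x (- a * exp (-x))).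
  { auto_derive. auto. ring. }
  assert (H2 : is_derive arcsinh (a * exp (-x)) (/ sqrt ((a * exp (- x)) ^ 2 + 1))).
  { apply is_derive_Reals. apply derivable_pt_lim_arcsinh. }
  exact (is_derive_comp arcsinh (fun x => a * exp (-x)) x _ _ H2 H1).
Qed.

Lemma phi_mono y1 y2 : 0 <= y2 <= y1 -> y2 * / sqrt (y2 ^ 2 + 1) <= y1 * / sqrt (y1 ^ 2 + 1).
Proof.
  intros [H0 H12].
  assert (S1 : 0 < sqrt (y1 ^ 2 + 1)) by (apply sqrt_lt_R0; nra).
  assert (S2 : 0 < sqrt (y2 ^ 2 + 1)) by (apply sqrt_lt_R0; nra).
  apply Rmult_le_reg_r with (sqrt (y1 ^ 2 + 1) * sqrt (y2 ^ 2 + 1)). nra.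
  replace (y2 * / sqrt (y2 ^ 2 + 1) * (sqrt (y1 ^ 2 + 1) * sqrt (y2 ^ 2 + 1))) with (y2 * sqrt (y1 ^ 2 + 1)) by (field; lra).
  replace (y1 * / sqrt (y1 ^ 2 + 1) * (sqrt (y1 ^ 2 + 1) * sqrt (y2 ^ 2 + 1))) with (y1 * sqrt (y2 ^ 2 + 1)) by (field; lra).
  assert (E1: y2 * sqrt (y1^2+1) = sqrt (y2^2 * (y1^2+1))) by (rewrite sqrt_mult by nra; rewrite sqrt_pow2 by lra; reflexivity).
  assert (E2: y1 * sqrt (y2^2+1) = sqrt (y1^2 * (y2^2+1))) by (rewrite sqrt_mult by nra; rewrite sqrt_pow2 by lra; reflexivity).
  rewrite E1, E2. apply sqrt_le_1; nra.
Qed.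

Lemma fder_mono a x1 x2 : 0 <= a -> x1 <= x2 -> fder a x1 <= fder a x2.
Proof.
  intros Ha Hx. unfold fder.
  assert (exp (- x2) <= exp (- x1)).
  { destruct (Req_dec x1 x2). subst; lra. left. apply exp_increasing. lra. }
  pose proof (exp_pos (- x2)).
  pose proof (phi_mono (a * exp (- x1)) (a * exp (- x2))).
  assert (0 <= a * exp (- x2) <= a * exp (- x1)) by (split; nra).
  specialize (H1 H2). lra.
Qed.

Lemma sinh_ge y : 0 <= y -> y <= sinh y.
Proof.
  intros Hy. destruct (Req_dec y 0). subst. rewrite sinh_0. lra.
  destruct (MVT_cor2 sinh cosh 0 y ltac:(lra) (fun c _ => derivable_pt_lim_sinh c)) as [c [Hc _]].
  rewrite sinh_0 in Hc. pose proof (cosh_ge1 c). nra.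
Qed.

Lemma arcsinh_le_id y : 0 <= y -> arcsinh y <= y.
Proof.
  intros Hy. rewrite <- (arcsinh_sinh y) at 2. apply arcsinh_le. apply sinh_ge. auto.
Qed.

Lemma chord a T t : 0 <= a -> 0 <= t <= T -> 0 < T ->
  T * (2 * arcsinh (a * exp (- t))) <=
  (T - t) * (2 * arcsinh (a * exp (- 0))) + t * (2 * arcsinh (a * exp (- T))).
Proof.
  intros Ha Ht HT.
  set (f := fun x => 2 * arcsinh (a * exp (- x))).
  change (T * f t <= (T - t) * f 0 + t * f T).
  destruct (Req_dec t 0). subst. lra.
  destruct (Req_dec t T). subst. lra.
  destruct (MVT_cor2 f (fder a) 0 t ltac:(lra) (fun c _ => der_f a c)) as [c1 [E1 H1]].
  destruct (MVT_cor2 f (fder a) t T ltac:(lra) (fun c _ => der_f a c)) as [c2 [E2 H2]].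
  assert (M : fder a c1 <= fder a c2) by (apply fder_mono; lra).
  assert (0 <= t * (T - t)) by nra.
  nra.
Qed.


Lemma key D t : 0 <= D ->
  arccosh ((cosh D - cosh 0) / exp (t + t) + cosh (0 + t - t)) = 2 * arcsinh (sinh (D / 2) * exp (- t)).
Proof.
  intros HD.
  set (y := sinh (D / 2) * exp (- t)).
  assert (Hy : 0 <= y) by (unfold y; apply Rmult_le_pos; [apply sinh_nonneg; lra | left; apply exp_pos]).
  set (z := arcsinh y).
  assert (Hz : 0 <= z) by (unfold z; rewrite <- arcsinh_0; apply arcsinh_le; auto).
  assert (Ey : sinh z = y) by apply sinh_arcsinh.
  replace ((cosh D - cosh 0) / exp (t + t) + cosh (0 + t - t)) with (cosh (2 * z)).
  apply arccosh_cosh. lra.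
  replace (0 + t - t) with 0 by ring. rewrite cosh_0.
  replace (2 * z) with (z + z) by ring. rewrite cosh_add.
  replace D with (D/2 + D/2) at 1 by field. rewrite cosh_add.
  pose proof (cosh_sinh_sq z). pose proof (cosh_sinh_sq (D/2)).
  replace (cosh z * cosh z + sinh z * sinh z) with (1 + 2 * y ^ 2) by (rewrite <- Ey; nra).
  replace (cosh (D / 2) * cosh (D / 2) + sinh (D / 2) * sinh (D / 2) - 1) with (2 * sinh (D/2) ^ 2) by nra.
  unfold y. rewrite exp_plus, exp_Ropp. field. apply Rgt_not_eq, exp_pos.
Qed.

Lemma part2b D t : 0 < D -> 0 <= t -> t <= D / 2 ->
  2 * arcsinh (sinh (D / 2) * exp (- t)) <= D - 2 / D * (exp (- D) + D - 1) * t.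
Proof.
  intros HD Ht HtD.
  set (T := D / 2).
  assert (HT : 0 < T) by (unfold T; lra).
  assert (Ha : 0 <= sinh (D/2)) by (apply sinh_nonneg; lra).
  assert (HtT : 0 <= t <= T) by (unfold T; lra).
  pose proof (chord (sinh (D/2)) T t Ha HtT HT) as Hc.
  replace (exp (- 0)) with 1 in Hc by (rewrite Ropp_0, exp_0; reflexivity).
  rewrite Rmult_1_r, arcsinh_sinh in Hc.
  assert (E : sinh (D / 2) * exp (- T) = (1 - exp (- D)) / 2).
  { unfold T, sinh. replace (- D) with (- (D/2) + - (D/2)) by field. rewrite exp_plus.
    pose proof (exp_opp_mul (D/2)). nra. }
  rewrite E in Hc.
  assert (Hl : arcsinh ((1 - exp (- D)) / 2) <= (1 - exp (- D)) / 2).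
  { apply arcsinh_le_id. assert (exp (- D) <= 1) by (rewrite <- exp_0; left; apply exp_increasing; lra). lra. }
  apply Rmult_le_reg_l with T. auto.
  replace (T * (D - 2 / D * (exp (- D) + D - 1) * t)) with ((T - t) * D + t * (1 - exp (- D))) by (unfold T; field; lra).
  assert (t * arcsinh ((1 - exp (- D)) / 2) <= t * ((1 - exp (- D)) / 2)) by (apply Rmult_le_compat_l; lra).
  unfold T in *. nra.
Qed.

Lemma part2c D t : 0 < D ->
  2 * arcsinh (sinh (D / 2) * exp (- t)) <= 2 * sinh (D / 2) * exp (- t).
Proof.
  intros HD. rewrite Rmult_assoc. apply Rmult_le_compat_l. lra. apply arcsinh_le_id.
  apply Rmult_le_pos. apply sinh_nonneg; lra. left; apply exp_pos.
Qed.

Theorem corollaryA2 (X : Type) (d : X -> X -> R) (g1 g2 : R -> X) (rho : R) :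
  CAT_m1 d ->
  geodesic_ray d g1 -> geodesic_ray d g2 ->
  asymptotic d g1 g2 ->
  busemann d g1 (g1 0) (g2 0) rho ->
  (forall s t, 0 <= s -> 0 <= t ->
     d (g1 s) (g2 t) <=
     arccosh ((cosh (d (g1 0) (g2 0)) - cosh rho) / exp (t + s)
              + cosh (rho + s - t))) /\
  (rho = 0 -> 0 < d (g1 0) (g2 0) ->
   forall t, 0 <= t ->
     let D := d (g1 0) (g2 0) in
     d (g1 t) (g2 t) <= 2 * arcsinh (sinh (D / 2) * exp (- t)) /\
     (t <= D / 2 ->
        2 * arcsinh (sinh (D / 2) * exp (- t))
        <= D - 2 / D * (exp (- D) + D - 1) * t) /\
     (D / 2 < t ->
        2 * arcsinh (sinh (D / 2) * exp (- t)) <= 2 * sinh (D / 2) * exp (- t))).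
Proof.
  intros Hcat R1 R2 Has Hb.
  pose proof (part1 X d g1 g2 rho Hcat R1 R2 Has Hb) as P1.
  split. exact P1.
  intros Hr HD t Ht D. subst rho.
  split; [| split].
  - rewrite <- key by (unfold D; lra). apply P1; lra.
  - intros; apply part2b; auto.
  - intros; apply part2c; auto.
Qed.
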